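(* For all real $\varepsilon\ge0$: $\mathsf{PC}_\mathbb{R}\equiv_W\mathsf{P}_{>\varepsilon}\mathsf{C}_\mathbb{R}$, where $\mathbb R$ carries Lebesgue measure.
   Context: A represented space is a pair $(X,\delta_X)$ with $\delta_X:\subseteq\mathbb{N}^\mathbb{N}\to X$ a partial surjection; $\mathbb R$ carries its Cauchy representation. A realizer of $f:\subseteq X\rightrightarrows Y$ is a partial $F$ with $\delta_Y F(p)\in f(\delta_X(p))$ for all $p\in\mathrm{dom}(f\circ\delta_X)$. $f\le_W g$ if there are computable partial $H,K:\subseteq\mathbb{N}^\mathbb{N}\to\mathbb{N}^\mathbb{N}$ such that $p\mapsto H\langle p,GK(p)\rangle$ realizes $f$ for every realizer $G$ of $g$; $\equiv_W$ is the induced equivalence. $\mathcal{A}_-(\mathbb R)$ denotes the closed subsets of $\mathbb R$ represented by negative information (a name of $A$ enumerates rational open intervals whose union is $\mathbb R\setminus A$). For $\varepsilon\in\mathbb R$, $\mathsf{P}_{>\varepsilon}\mathsf{C}_\mathbb R:\subseteq\mathcal A_-(\mathbb R)\rightrightarrows\mathbb R$, $A\mapsto A$, is defined on closed $A$ with Lebesgue measure $\lambda(A)>\varepsilon$, and $\mathsf{PC}_\mathbb R:=\mathsf P_{>0}\mathsf C_\mathbb R$. *)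

(* Defs.v *)
From mathcomp Require Import all_boot all_order all_algebra.
From mathcomp Require Import all_classical all_reals all_analysis.
Set Implicit Arguments. Unset Strict Implicit. Unset Printing Implicit Defensive.
Import Order.TTheory GRing.Theory Num.Theory.
Local Open Scope classical_set_scope.
Local Open Scope ring_scope.

Definition baire := nat -> nat.

(* Cantor pairing on nat and its inverse (diagonal enumeration). *)
Definition npair (x y : nat) : nat := ((x + y) * (x + y).+1)./2 + y.
Fixpoint nunpair (n : nat) : nat * nat :=
  match n with
  | 0 => (0, 0)
  | m.+1 => let: (x, y) := nunpair m in
            if x is x'.+1 then (x', y.+1) else (y.+1, 0)
  end.

Fixpoint code_seq (s : seq nat) : nat :=
  match s with [::] => 0 | x :: s' => (npair x (code_seq s')).+1 end.

Definition bjoin (p q : baire) : baire :=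
  fun n => if odd n then q n./2 else p n./2.

Inductive rcode : Type :=
| RZero : rcode
| RSucc : rcode
| RProj : nat -> rcode
| RComp : rcode -> list rcode -> rcode
| RPrec : rcode -> rcode -> rcode
| RMu   : rcode -> rcode.

Inductive reval : rcode -> seq nat -> nat -> Prop :=
| ev_zero xs : reval RZero xs 0
| ev_succ x xs : reval RSucc (x :: xs) x.+1
| ev_proj i xs : (i < size xs)%N -> reval (RProj i) xs (nth 0%N xs i)
| ev_comp f gs xs ys y :
    revals gs xs ys -> reval f ys y -> reval (RComp f gs) xs y
| ev_prec0 f g xs y : reval f xs y -> reval (RPrec f g) (0%N :: xs) y
| ev_precS f g n xs y z :
    reval (RPrec f g) (n :: xs) y -> reval g (n :: y :: xs) z ->
    reval (RPrec f g) (n.+1 :: xs) z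
| ev_mu f xs n :
    reval f (n :: xs) 0 ->
    (forall m, (m < n)%N -> exists k, reval f (m :: xs) k.+1) ->
    reval (RMu f) xs n
with revals : list rcode -> seq nat -> seq nat -> Prop :=
| evs_nil xs : revals nil xs [::]
| evs_cons g gs xs y ys :
    reval g xs y -> revals gs xs ys -> revals (g :: gs) xs (y :: ys).

Definition computable_nat (g : nat -> nat) : Prop :=
  exists c : rcode, forall x, reval c [:: x] (g x).

Definition computable_word (phi : seq nat -> seq nat) : Prop :=
  exists g : nat -> nat, computable_nat g /\
    forall s, g (code_seq s) = code_seq (phi s).

Definition word_monotone (phi : seq nat -> seq nat) : Prop :=
  forall s t, prefix s t -> prefix (phi s) (phi t).

(* The (partial) function on Baire space induced by a monotone word
   function phi: F(p) = q iff q = sup_m phi(p|m). *)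
Definition word_fun_computes (phi : seq nat -> seq nat) (p q : baire) : Prop :=
  forall n, exists m, (n < size (phi (mkseq p m)))%N /\
                      nth 0%N (phi (mkseq p m)) n = q n.

(* A partial function F :subseteq N^N -> N^N (None = undefined) is
   computable iff some Type-2 machine, given as a computable monotone
   word function, computes F(p) on every p in dom F. *)
Definition computable_partial (F : baire -> option baire) : Prop :=
  exists phi, computable_word phi /\ word_monotone phi /\
    forall p q, F p = Some q -> word_fun_computes phi p q.

(* A representation of X is a partial surjection delta : N^N -> X,
   given here as its graph: [delta p x] iff p is a name of x. *)
Definition representation (X : Type) := baire -> X -> Prop.

(* A partial multivalued function f :subseteq X => Y is given by its
   value sets; dom f = { x | f x is nonempty }. *)
Definition mvfun (X Y : Type) := X -> set Y.

Definition realizes (X Y : Type) (dX : representation X) (dY : representation Y)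
  (f : mvfun X Y) (F : baire -> option baire) : Prop :=
  forall p x, dX p x -> f x !=set0 ->
    exists q, F p = Some q /\ exists y, dY q y /\ f x y.

Definition obind_b (o : option baire) (k : baire -> option baire) :=
  match o with Some a => k a | None => None end.

Definition weihrauch_le (X Y U V : Type)
  (dX : representation X) (dY : representation Y) (f : mvfun X Y)
  (dU : representation U) (dV : representation V) (g : mvfun U V) : Prop :=
  exists H K : baire -> option baire,
    computable_partial H /\ computable_partial K /\
    forall G : baire -> option baire, realizes dU dV g G ->
      realizes dX dY f
        (fun p => obind_b (K p) (fun k => obind_b (G k) (fun r => H (bjoin p r)))).

Definition weihrauch_equiv (X Y U V : Type)
  (dX : representation X) (dY : representation Y) (f : mvfun X Y)
  (dU : representation U) (dV : representation V) (g : mvfun U V) : Prop :=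
  weihrauch_le dX dY f dU dV g /\ weihrauch_le dU dV g dX dY f.

Section Reals.
Variable R : realType.

Definition nuQ (n : nat) : R :=
  let: (a, r) := nunpair n in let: (b, c) := nunpair r in
  (a%:R - b%:R) / (c.+1)%:R.

Definition nuI (n : nat) : set R :=
  let: (i, j) := nunpair n in [set x | nuQ i < x < nuQ j].

Definition delta_cauchy : representation R :=
  fun p x => forall n, `|nuQ (p n) - x| <= (2%:R ^- n : R).

Definition delta_closed_neg : representation (set R) :=
  fun p A => ~` A = \bigcup_n nuI (p n).

Definition P_gt_C_R (eps : R) : mvfun (set R) R :=
  fun A => [set x | (eps%:E < lebesgue_measure A)%E /\ A x].

End Reals.

(* Main.v *)
Require Import Defs.
From mathcomp Require Import all_boot all_order all_algebra.
From mathcomp Require Import all_classical all_reals all_analysis.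
From mathcomp Require Import zify ring lra measurable_realfun.
Import Order.TTheory GRing.Theory Num.Theory.

Section Helpers.
Set Implicit Arguments. Unset Strict Implicit. Unset Printing Implicit Defensive.

Definition rc (k : nat) (f : seq nat -> nat) :=
  exists c, forall xs, size xs = k -> reval c xs (f xs).

Lemma rc_ext k f g : (forall xs, size xs = k -> f xs = g xs) -> rc k f -> rc k g.
Proof. by move=> E [c Hc]; exists c => xs Hs; rewrite -E //; apply: Hc. Qed.

Lemma rc_zero k : rc k (fun _ => 0).
Proof. by exists RZero => xs _; constructor. Qed.

Lemma rc_proj k i : i < k -> rc k (fun xs => nth 0 xs i).
Proof. by move=> ik; exists (RProj i) => xs Hs; constructor; rewrite Hs. Qed.

Lemma rc_succ : rc 1 (fun xs => (nth 0 xs 0).+1).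
Proof. by exists RSucc => [[|x [|]]] //= _; constructor. Qed.

Fixpoint allrc k (fs : seq (seq nat -> nat)) : Prop :=
  match fs with [::] => True | f :: fs' => rc k f /\ allrc k fs' end.

Lemma allrc_revals k fs : allrc k fs ->
  exists cs, forall xs, size xs = k -> revals cs xs (map (fun g => g xs) fs).
Proof.
elim: fs => [|f fs IH] /=; first by exists nil => xs _; constructor.
case=> [[c Hc] /IH [cs Hcs]]; exists (c :: cs) => xs Hs.
by constructor; [apply: Hc | apply: Hcs].
Qed.

Lemma rc_comp k f fs : rc (size fs) f -> allrc k fs ->
  rc k (fun xs => f (map (fun g => g xs) fs)).
Proof.
move=> [c Hc] /allrc_revals [cs Hcs]; exists (RComp c cs) => xs Hs.
by apply: ev_comp (Hcs _ Hs) _; apply: Hc; rewrite size_map.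
Qed.

Fixpoint precf (f : seq nat -> nat) (g : seq nat -> nat) n ys :=
  if n is m.+1 then g (m :: precf f g m ys :: ys) else f ys.

Lemma rc_prec k f g : rc k f -> rc k.+2 g ->
  rc k.+1 (fun xs => precf f g (head 0 xs) (behead xs)).
Proof.
move=> [cf Hf] [cg Hg]; exists (RPrec cf cg) => [[|n ys]] //= [Hs].
elim: n => [|n IH] /=; first by constructor; apply: Hf.
by apply: ev_precS IH _; apply: Hg => /=; rewrite Hs.
Qed.

Lemma rc_mu k f h : rc k.+1 f ->
  (forall xs, size xs = k -> f (h xs :: xs) = 0 /\ forall m, m < h xs -> f (m :: xs) <> 0) ->
  rc k h.
Proof.
move=> [c Hc] H; exists (RMu c) => xs Hs; have [H0 H1] := H xs Hs.
apply: ev_mu; first by rewrite -H0; apply: Hc => /=; rewrite Hs.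
move=> m /H1 Hm; exists (f (m :: xs)).-1; rewrite prednK; last by case: (f _) Hm.
by apply: Hc => /=; rewrite Hs.
Qed.

Definition rc1 (f : nat -> nat) := rc 1 (fun xs => f (nth 0 xs 0)).
Definition rc2 (f : nat -> nat -> nat) := rc 2 (fun xs => f (nth 0 xs 0) (nth 0 xs 1)).
Definition rc3 (f : nat -> nat -> nat -> nat) :=
  rc 3 (fun xs => f (nth 0 xs 0) (nth 0 xs 1) (nth 0 xs 2)).

Lemma rc_comp1 k f g : rc1 f -> rc k g -> rc k (fun xs => f (g xs)).
Proof. by move=> Hf Hg; exact: (rc_comp (f := fun ys => f (nth 0 ys 0)) (fs := [:: g])). Qed.
Lemma rc_comp2 k f g1 g2 : rc2 f -> rc k g1 -> rc k g2 -> rc k (fun xs => f (g1 xs) (g2 xs)).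
Proof. by move=> Hf H1 H2; exact: (rc_comp (f := fun ys => f (nth 0 ys 0) (nth 0 ys 1)) (fs := [:: g1; g2])). Qed.
Lemma rc_comp3 k f g1 g2 g3 : rc3 f -> rc k g1 -> rc k g2 -> rc k g3 ->
  rc k (fun xs => f (g1 xs) (g2 xs) (g3 xs)).
Proof. by move=> Hf H1 H2 H3; exact: (rc_comp (f := fun ys => f (nth 0 ys 0) (nth 0 ys 1) (nth 0 ys 2)) (fs := [:: g1; g2; g3])). Qed.

Lemma rc_const k n : rc k (fun _ => n).
Proof.
elim: n => [|n IH]; first exact: rc_zero.
by apply: (rc_comp1 (f := S)) IH; exact: rc_succ.
Qed.

Ltac rcp := solve [apply: rc_proj; done].

Lemma rc_prec1 (f : nat -> nat) (g : nat -> nat -> nat -> nat) (h : nat -> nat -> nat) :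
  rc1 f -> rc3 g -> (forall y, h 0 y = f y) -> (forall n y, h n.+1 y = g n (h n y) y) ->
  rc2 h.
Proof.
move=> Hf Hg H0 HS.
have := rc_prec (f := fun xs => f (nth 0 xs 0))
  (g := fun xs => g (nth 0 xs 0) (nth 0 xs 1) (nth 0 xs 2)) Hf Hg.
apply: rc_ext => [[|n [|y [|]]]] //= _.
by elim: n => [|n IH] /=; rewrite ?H0 ?HS ?IH.
Qed.

Lemma rc_prec2 (f : nat -> nat -> nat) (g : nat -> nat -> nat -> nat -> nat)
  (h : nat -> nat -> nat -> nat) :
  rc2 f -> rc 4 (fun xs => g (nth 0 xs 0) (nth 0 xs 1) (nth 0 xs 2) (nth 0 xs 3)) ->
  (forall y z, h 0 y z = f y z) -> (forall n y z, h n.+1 y z = g n (h n y z) y z) ->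
  rc3 h.
Proof.
move=> Hf Hg H0 HS.
have := rc_prec (f := fun xs => f (nth 0 xs 0) (nth 0 xs 1))
  (g := fun xs => g (nth 0 xs 0) (nth 0 xs 1) (nth 0 xs 2) (nth 0 xs 3)) Hf Hg.
apply: rc_ext => [[|n [|y [|z [|]]]]] //= _.
by elim: n => [|n IH] /=; rewrite ?H0 ?HS ?IH.
Qed.

Lemma rc_add : rc2 addn.
Proof.
apply: (rc_prec1 (f := id) (g := fun _ a _ => a.+1)) => //.
- exact: rc_proj.
- by apply: (rc_comp1 (f := S)); [exact: rc_succ | rcp].
Qed.

Lemma rc_mul : rc2 muln.
Proof.
apply: (rc_prec1 (f := fun _ => 0) (g := fun _ a y => y + a)) => //.
- exact: rc_zero.
- by apply: (rc_comp2 (f := addn)); [exact: rc_add | rcp | rcp].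
Qed.

Lemma rc_pred : rc1 predn.
Proof.
have H : rc2 (fun n (_ : nat) => n.-1).
  apply: (rc_prec1 (f := fun _ => 0) (g := fun n _ _ => n)) => //.
  exact: rc_zero. rcp.
by apply: (rc_comp2 (f := fun n (_ : nat) => n.-1)) H _ _; [rcp | exact: rc_zero].
Qed.

Lemma rc_subr : rc2 (fun y x => x - y).
Proof.
apply: (rc_prec1 (f := id) (g := fun _ a _ => a.-1)).
- exact: rc_proj.
- by apply: (rc_comp1 (f := predn)); [exact: rc_pred | rcp].
- by move=> y; rewrite subn0.
- by move=> n y /=; rewrite subnS.
Qed.

Lemma rc_sub : rc2 subn.
Proof. by apply: (rc_comp2 (f := fun y x => x - y)); [exact: rc_subr| rcp | rcp]. Qed.

Definition ifz (c a b : nat) := if c is 0 then a else b.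
Lemma rc_ifz : rc3 ifz.
Proof.
have H : rc3 (fun c a b => ifz c a b).
  apply: (rc_prec2 (f := fun a _ => a) (g := fun _ _ _ b => b)) => //.
  rcp. rcp.
exact: H.
Qed.

Lemma rc_comp_ifz k c a b : rc k c -> rc k a -> rc k b ->
  rc k (fun xs => ifz (c xs) (a xs) (b xs)).
Proof. by apply: rc_comp3; exact: rc_ifz. Qed.

Lemma rc_addE k g1 g2 : rc k g1 -> rc k g2 -> rc k (fun xs => g1 xs + g2 xs).
Proof. exact: rc_comp2 rc_add. Qed.
Lemma rc_mulE k g1 g2 : rc k g1 -> rc k g2 -> rc k (fun xs => g1 xs * g2 xs).
Proof. exact: rc_comp2 rc_mul. Qed.
Lemma rc_subE k g1 g2 : rc k g1 -> rc k g2 -> rc k (fun xs => g1 xs - g2 xs).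
Proof. exact: rc_comp2 rc_sub. Qed.
Lemma rc_succE k g1 : rc k g1 -> rc k (fun xs => (g1 xs).+1).
Proof. exact: rc_comp1 rc_succ. Qed.
Lemma rc_predE k g1 : rc k g1 -> rc k (fun xs => (g1 xs).-1).
Proof. exact: rc_comp1 rc_pred. Qed.
Lemma rc_ifzE k c a b : rc k c -> rc k a -> rc k b ->
  rc k (fun xs => ifz (c xs) (a xs) (b xs)).
Proof. exact: rc_comp_ifz. Qed.
Lemma rc_doubleE k g1 : rc k g1 -> rc k (fun xs => (g1 xs).*2).
Proof. by move=> H; apply: rc_ext (rc_addE H H) => xs _; rewrite addnn. Qed.

Ltac rcs := repeat first
  [ exact: rc_const | assumption
  | (apply: rc_proj; done)
  | apply: rc_addE | apply: rc_mulE | apply: rc_subE | apply: rc_succE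
  | apply: rc_predE | apply: rc_ifzE | apply: rc_doubleE ].

Lemma rc_divS : rc2 (fun n d => n %/ d.+1).
Proof.
apply: (rc_mu (f := fun xs => (nth 0 xs 1).+1 - (nth 0 xs 0).+1 * (nth 0 xs 2).+1)).
  by rcs.
move=> [|n [|d [|]]] //= _; split.
  by apply/eqP; rewrite subn_eq0; apply: ltn_ceil.
move=> m Hm; have := leq_trunc_div n d.+1.
have : m.+1 * d.+1 <= n %/ d.+1 * d.+1 := leq_mul Hm (leqnn _); lia.
Qed.

Lemma rc_divSE k g1 d : rc k g1 -> rc k (fun xs => g1 xs %/ d.+1).
Proof. by move=> H; apply: (rc_comp2 (f := fun n d => n %/ d.+1)) rc_divS H _; rcs. Qed.
Lemma rc_divSE' k g1 g2 : rc k g1 -> rc k g2 -> rc k (fun xs => g1 xs %/ (g2 xs).+1).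
Proof. by move=> H1 H2; apply: (rc_comp2 (f := fun n d => n %/ d.+1)) rc_divS H1 H2. Qed.

Lemma rc_halfE k g1 : rc k g1 -> rc k (fun xs => (g1 xs)./2).
Proof.
by move=> H; apply: rc_ext (rc_divSE 1 H) => xs _; rewrite -divn2.
Qed.
Lemma rc_oddE k g1 : rc k g1 -> rc k (fun xs => nat_of_bool (odd (g1 xs))).
Proof.
move=> H; have H2 : rc k (fun xs => g1 xs - ((g1 xs)./2).*2).
  apply: rc_subE => //; apply: rc_doubleE; exact: rc_halfE.
by apply: rc_ext H2 => xs _; have := odd_double_half (g1 xs); lia.
Qed.
Lemma rc_leqE k g1 g2 (a b : seq nat -> nat) : rc k g1 -> rc k g2 -> rc k a -> rc k b ->
  rc k (fun xs => if g1 xs <= g2 xs then a xs else b xs).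
Proof.
move=> H1 H2 Ha Hb; have := rc_ifzE (rc_subE H1 H2) Ha Hb.
by apply: rc_ext => xs _; rewrite /leq; case: (_ - _).
Qed.

Ltac rcs2 := repeat first
  [ exact: rc_const | assumption
  | (apply: rc_proj; done)
  | apply: rc_addE | apply: rc_mulE | apply: rc_subE | apply: rc_succE
  | apply: rc_predE | apply: rc_ifzE | apply: rc_doubleE | apply: rc_halfE
  | apply: rc_oddE | apply: rc_divSE' | apply: rc_leqE ].

Definition Tn w := (w * w.+1)./2.
Arguments Tn : simpl never.
Arguments npair : simpl never.
Lemma TnS w : Tn w.+1 = Tn w + w.+1.
Proof. rewrite /Tn; lia. Qed.
Lemma Tn_mono m n : m <= n -> Tn m <= Tn n.
Proof.
move=> /subnK <-; elim: (n - m) => [|d IH] //; rewrite addSn TnS; lia.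
Qed.
Lemma npairE x y : npair x y = Tn (x + y) + y.
Proof. by []. Qed.

Lemma npair_nunpair n : npair (nunpair n).1 (nunpair n).2 = n.
Proof.
elim: n => [|n IH] //.
have -> : nunpair n.+1 = let: (x,y) := nunpair n in
   if x is x'.+1 then (x', y.+1) else (y.+1, 0) by [].
case: (nunpair n) IH => [[|x] y] IH; cbn [fst snd] in IH |- *.
  rewrite (npairE 0 y) add0n in IH; rewrite (npairE y.+1 0) !addn0 TnS; lia.
rewrite (npairE x.+1 y) in IH; rewrite (npairE x y.+1) !addnS TnS.
rewrite addSn in IH; rewrite TnS in IH; lia.
Qed.

Lemma npair_bounds x y : Tn (x + y) <= npair x y < Tn (x + y).+1.
Proof. rewrite npairE TnS; lia. Qed.

Lemma npair_inj x y x' y' : npair x y = npair x' y' -> x = x' /\ y = y'.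
Proof.
move=> E; have [b1 b2] := andP (npair_bounds x y).
have [b1' b2'] := andP (npair_bounds x' y').
have Hs : x + y = x' + y'.
  apply/eqP; rewrite eqn_leq; apply/andP; split; rewrite leqNgt; apply/negP => H.
    have := Tn_mono H; lia.
  have := Tn_mono H; lia.
move: E; rewrite !npairE Hs => E; lia.
Qed.

Lemma nunpair_npair x y : nunpair (npair x y) = (x, y).
Proof.
have := npair_nunpair (npair x y); case: (nunpair _) => a b /= /npair_inj [-> ->].
by [].
Qed.

Definition wsum n := (nunpair n).1 + (nunpair n).2.
Lemma rc_Tn k g : rc k g -> rc k (fun xs => Tn (g xs)).
Proof. move=> H; rewrite /Tn; rcs2. Qed.

Lemma rc_wsum : rc1 wsum.
Proof.
apply: (rc_mu (f := fun xs => (nth 0 xs 1).+1 - Tn (nth 0 xs 0).+1)).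
  by apply: rc_subE; [rcs2 | apply: rc_Tn; rcs2].
move=> [|n [|]] //= _; have := npair_bounds (nunpair n).1 (nunpair n).2.
rewrite npair_nunpair /wsum => /andP [b1 b2]; split; first lia.
move=> m Hm; have := Tn_mono Hm; lia.
Qed.

Lemma unpair1E n : (nunpair n).1 = wsum n - (n - Tn (wsum n)).
Proof. have := npairE (nunpair n).1 (nunpair n).2; rewrite npair_nunpair /wsum; lia. Qed.
Lemma unpair2E n : (nunpair n).2 = n - Tn (wsum n).
Proof. have := npairE (nunpair n).1 (nunpair n).2; rewrite npair_nunpair /wsum; lia. Qed.

Lemma rc_wsumE k g : rc k g -> rc k (fun xs => wsum (g xs)).
Proof. exact: rc_comp1 rc_wsum. Qed.
Lemma rc_u1E k g : rc k g -> rc k (fun xs => (nunpair (g xs)).1).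
Proof.
move=> H; apply: rc_ext => [xs _|]; first by rewrite unpair1E.
apply: rc_subE; first exact: rc_wsumE.
by apply: rc_subE => //; apply: rc_Tn; apply: rc_wsumE.
Qed.
Lemma rc_u2E k g : rc k g -> rc k (fun xs => (nunpair (g xs)).2).
Proof.
move=> H; apply: rc_ext => [xs _|]; first by rewrite unpair2E.
by apply: rc_subE => //; apply: rc_Tn; apply: rc_wsumE.
Qed.
Lemma rc_npairE k g1 g2 : rc k g1 -> rc k g2 -> rc k (fun xs => npair (g1 xs) (g2 xs)).
Proof. move=> H1 H2; rewrite /npair; rcs2. Qed.

Ltac rcs3 := repeat first
  [ exact: rc_const | assumption
  | (apply: rc_proj; done)
  | apply: rc_addE | apply: rc_mulE | apply: rc_subE | apply: rc_succE
  | apply: rc_predE | apply: rc_ifzE | apply: rc_doubleE | apply: rc_halfE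
  | apply: rc_oddE | apply: rc_divSE' | apply: rc_leqE
  | apply: rc_u1E | apply: rc_u2E | apply: rc_npairE ].

Definition chead c := (nunpair c.-1).1.
Definition ctail c := (nunpair c.-1).2.
Definition ctails i c := iter i ctail c.
Definition cnth c i := chead (ctails i c).

Lemma ctail_cons x s : ctail (code_seq (x :: s)) = code_seq s.
Proof. by rewrite /ctail /= nunpair_npair. Qed.
Lemma chead_cons x s : chead (code_seq (x :: s)) = x.
Proof. by rewrite /chead /= nunpair_npair. Qed.

Lemma ctails_code i s : ctails i (code_seq s) = code_seq (drop i s).
Proof.
rewrite /ctails; elim: i s => [|i IH] s; first by rewrite drop0.
rewrite iterSr; case: s => [|x s].
  have -> : ctail (code_seq [::]) = code_seq [::] by [].
  by rewrite IH.
by rewrite ctail_cons IH.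
Qed.

Lemma cnth_code s i : cnth (code_seq s) i = nth 0 s i.
Proof.
rewrite /cnth ctails_code -[in RHS](addn0 i) -nth_drop.
by case: (drop i s) => [|x t] //; rewrite chead_cons.
Qed.

Lemma code_seq_inj s t : code_seq s = code_seq t -> s = t.
Proof.
elim: s t => [|x s IH] [|y t] //= [] E.
have := nunpair_npair x (code_seq s); rewrite E nunpair_npair => -[-> H].
by rewrite (IH t).
Qed.

Lemma code_seq_surj c : exists s, code_seq s == c.
Proof.
elim/ltn_ind: c => [[|m] IH]; first by exists [::].
have := npair_bounds (nunpair m).1 (nunpair m).2; rewrite npair_nunpair => /andP[b1 _].
have [|s /eqP Hs] := IH (nunpair m).2.
  have : (nunpair m).2 <= Tn ((nunpair m).1 + (nunpair m).2).
    rewrite /Tn; set u := (nunpair m).1; set v := (nunpair m).2; nia.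
  lia.
exists ((nunpair m).1 :: s) => /=; by rewrite Hs npair_nunpair.
Qed.

Definition cdecode c := xchoose (code_seq_surj c).
Lemma cdecodeK c : code_seq (cdecode c) = c.
Proof. exact/eqP/(xchooseP (code_seq_surj c)). Qed.
Definition csize c := size (cdecode c).
Lemma csize_code s : csize (code_seq s) = size s.
Proof. by rewrite /csize; congr size; apply: code_seq_inj; rewrite cdecodeK. Qed.

Lemma rc_ctails : rc2 ctails.
Proof.
apply: (rc_prec1 (f := id) (g := fun _ a _ => ctail a)).
- exact: rc_proj.
- rewrite /ctail; rcs3.
- by [].
- by move=> n y; rewrite /ctails iterS.
Qed.

Lemma rc_cnthE k g1 g2 : rc k g1 -> rc k g2 -> rc k (fun xs => cnth (g1 xs) (g2 xs)).
Proof.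
move=> H1 H2; have H : rc k (fun xs => ctails (g2 xs) (g1 xs)) := rc_comp2 rc_ctails H2 H1.
by rewrite /cnth /chead; apply: rc_u1E; apply: rc_predE.
Qed.

Lemma rc_csize : rc1 csize.
Proof.
apply: (rc_mu (f := fun xs => ctails (nth 0 xs 0) (nth 0 xs 1))).
  by apply: (rc_comp2 rc_ctails); rcs3.
move=> [|c [|]] //= _; rewrite -(cdecodeK c) csize_code; split.
  by rewrite ctails_code drop_size.
by move=> m Hm; rewrite ctails_code (drop_nth 0).
Qed.

Fixpoint bld (F : nat -> nat -> nat) (j L c : nat) :=
  if j is j'.+1 then (npair (F c (L - j'.+1)) (bld F j' L c)).+1 else 0.

Lemma bld_spec F j L c : j <= L -> bld F j L c = code_seq (drop (L - j) (mkseq (F c) L)).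
Proof.
elim: j => [|j IH] Hj /=.
  by rewrite subn0 drop_oversize // size_mkseq.
rewrite IH ?(ltnW Hj) //.
rewrite [in RHS](drop_nth 0); last by rewrite size_mkseq; lia.
rewrite nth_mkseq; last lia.
by have -> : (L - j.+1).+1 = L - j by lia.
Qed.

Lemma rc_build (F : nat -> nat -> nat) (Lf : nat -> nat) :
  rc2 F -> rc1 Lf -> rc1 (fun c => code_seq (mkseq (F c) (Lf c))).
Proof.
move=> HF HL.
have Hb : rc3 (bld F).
  apply: (rc_prec2 (f := fun _ _ => 0)
     (g := fun n a L c => (npair (F c (L - n.+1)) a).+1)).
  - exact: rc_zero.
  - apply: rc_succE; apply: rc_npairE; last by rcs3.
    by apply: (rc_comp2 HF); rcs3.
  - by [].
  - by [].
have := rc_comp3 Hb HL HL (rc_proj (k := 1) (i := 0) erefl).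
by apply: rc_ext => xs _; rewrite bld_spec // subnn drop0.
Qed.

Lemma rc1_nat (g : nat -> nat) : rc1 g -> computable_nat g.
Proof. by case=> c Hc; exists c => x; exact: (Hc [:: x]). Qed.

Lemma local_computable (F : nat -> nat -> nat -> nat) (a b : nat -> nat) (Lf : nat -> nat) :
  rc3 F -> rc1 a -> rc1 b -> rc1 Lf ->
  (forall n m, n < Lf m -> a n < m /\ b n < m) ->
  (forall m n, m <= n -> Lf m <= Lf n) -> (forall n, exists m, n < Lf m) ->
  computable_partial (fun p => Some (fun n => F (p (a n)) (p (b n)) n)).
Proof.
move=> HF Ha Hb HL Hab Hmono Hunb.
pose phi (w : seq nat) := mkseq (fun n => F (nth 0 w (a n)) (nth 0 w (b n)) n) (Lf (size w)).
exists phi; split; [|split].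
- exists (fun c => code_seq (mkseq (fun n => F (cnth c (a n)) (cnth c (b n)) n) (Lf (csize c)))).
  split; last by move=> s; rewrite csize_code; congr code_seq; apply: eq_mkseq => n;
    rewrite !cnth_code.
  apply: rc1_nat; apply: (rc_build (F := fun c n => F (cnth c (a n)) (cnth c (b n)) n)
      (Lf := fun c => Lf (csize c))).
  + apply: (rc_comp3 HF); last exact: rc_proj.
    * apply: rc_cnthE; first exact: rc_proj.
      exact: (rc_comp1 Ha (rc_proj (k := 2) (i := 1) erefl)).
    * apply: rc_cnthE; first exact: rc_proj.
      exact: (rc_comp1 Hb (rc_proj (k := 2) (i := 1) erefl)).
  + exact: (rc_comp1 HL (rc_comp1 rc_csize (rc_proj (k := 1) (i := 0) erefl))).
- move=> s t /prefixP [u ->]; rewrite prefixE; apply/eqP.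
  have Hsz : Lf (size s) <= Lf (size (s ++ u)) by apply: Hmono; rewrite size_cat leq_addr.
  have Hst : size (take (size (phi s)) (phi (s ++ u))) = Lf (size s).
    by rewrite size_takel !size_mkseq.
  apply: (@eq_from_nth _ 0); first by rewrite Hst size_mkseq.
  move=> i; rewrite Hst => Hi.
  rewrite nth_take; last by rewrite size_mkseq.
  rewrite nth_mkseq; last exact: leq_trans Hi Hsz.
  rewrite nth_mkseq //.
  have [Ha' Hb'] := Hab _ _ Hi.
  by rewrite !nth_cat Ha' Hb'.
- move=> p q [<-] n; have [m Hm] := Hunb n; exists m.
  rewrite /phi size_mkseq size_mkseq; split => //.
  have [Ha' Hb'] := Hab _ _ Hm.
  by rewrite nth_mkseq // !nth_mkseq.
Qed.

Ltac rcs4 := repeat first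
  [ exact: rc_const | assumption
  | (apply: rc_proj; done)
  | apply: rc_addE | apply: rc_mulE | apply: rc_subE | apply: rc_succE
  | apply: rc_predE | apply: rc_ifzE | apply: rc_doubleE | apply: rc_halfE
  | apply: rc_oddE | apply: rc_divSE' | apply: rc_leqE
  | apply: rc_u1E | apply: rc_u2E | apply: rc_npairE ].

Definition qc a b c := npair a (npair b c).
Definition qa q := (nunpair q).1.
Definition qb q := (nunpair (nunpair q).2).1.
Definition qd q := (nunpair (nunpair q).2).2.
Lemma qcE q : qc (qa q) (qb q) (qd q) = q.
Proof. by rewrite /qc /qb /qd npair_nunpair /qa npair_nunpair. Qed.
Lemma qa_qc a b c : qa (qc a b c) = a. Proof. by rewrite /qa /qc nunpair_npair. Qed.
Lemma qb_qc a b c : qb (qc a b c) = b. Proof. by rewrite /qb /qc !nunpair_npair. Qed.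
Lemma qd_qc a b c : qd (qc a b c) = c. Proof. by rewrite /qd /qc !nunpair_npair. Qed.

Definition qshift q tp tn := qc (qa q + tp * (qd q).+1) (qb q + tn * (qd q).+1) (qd q).
Definition qle q1 q2 := qa q1 * (qd q2).+1 + qb q2 * (qd q1).+1 <= qa q2 * (qd q1).+1 + qb q1 * (qd q2).+1.
Definition qmax q1 q2 := if qle q1 q2 then q2 else q1.
Definition qmin q1 q2 := if qle q1 q2 then q1 else q2.

Definition zz s := (nunpair s).1.
Definition tpf s := s.*2 + odd (zz s) * (zz s).+1./2.
Definition tnf s := (~~ odd (zz s)) * (zz s)./2.

(* K: output code number n, given v = p (idxK n) *)
Definition idxK n := if odd n then (nunpair n./2).2 else 0.
Definition outK1 (v s : nat) :=
    npair (qmax (qshift (nunpair v).1 (tpf s) (tnf s)) (qc s.*2 1 0))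
          (qmin (qshift (nunpair v).2 (tpf s) (tnf s)) (qc s.*2.+2 0 0)).
Definition outK2 (s : nat) := npair (qc s.*2.+1 0 0) (qc s.*2.+2 0 0).
Definition outK3 (j : nat) := npair (qc 0 j.+1 0) (qc 0 0 0).
Definition outK (v n : nat) :=
  if odd n then outK1 v (nunpair n./2).1
  else if odd n./2 then outK2 n./2./2 else outK3 n./2./2.

(* H: slot from an approximation code x, output for y *)
Definition slotH x := ((qa x).*2 + (qd x).+1 - (qb x).*2) %/ (4 * qd x + 3).+1.
Definition outH (x y : nat) := qshift y (tnf (slotH x)) (tpf (slotH x)).

Section RcProofs.
Local Ltac unf := rewrite ?/outK ?/outH ?/slotH ?/qmax ?/qmin ?/qle ?/qshift ?/qc ?/qa ?/qb ?/qd ?/tpf ?/tnf ?/zz ?/idxK.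

Lemma rc_odd_if k c (a b : seq nat -> nat) : rc k c -> rc k a -> rc k b ->
  rc k (fun xs => if odd (c xs) then a xs else b xs).
Proof.
move=> Hc Ha Hb; have := rc_ifzE (rc_oddE Hc) Hb Ha.
by apply: rc_ext => xs _; case: odd.
Qed.
Lemma rc_negb k c : rc k c -> rc k (fun xs => nat_of_bool (~~ odd (c xs))).
Proof.
move=> Hc; have := rc_subE (rc_const k 1) (rc_oddE Hc).
by apply: rc_ext => xs _; case: odd.
Qed.
Lemma rc_oddnat k c : rc k c -> rc k (fun xs => nat_of_bool (odd (c xs))).
Proof. exact: rc_oddE. Qed.

Ltac rcs5 := repeat first
  [ exact: rc_const | assumption
  | (apply: rc_proj; done)
  | apply: rc_odd_if | apply: rc_negb
  | apply: rc_addE | apply: rc_mulE | apply: rc_subE | apply: rc_succE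
  | apply: rc_predE | apply: rc_ifzE | apply: rc_doubleE | apply: rc_halfE
  | apply: rc_oddE | apply: rc_divSE' | apply: rc_leqE
  | apply: rc_u1E | apply: rc_u2E | apply: rc_npairE ].

Lemma rc_idxK : rc1 idxK.
Proof. rewrite /idxK; rcs5. Qed.

Lemma rc_tpf k g : rc k g -> rc k (fun xs => tpf (g xs)).
Proof. move=> H; rewrite /tpf /zz; rcs5. Qed.
Lemma rc_tnf k g : rc k g -> rc k (fun xs => tnf (g xs)).
Proof. move=> H; rewrite /tnf /zz; rcs5. Qed.
Lemma rc_qshift k g1 g2 g3 : rc k g1 -> rc k g2 -> rc k g3 ->
  rc k (fun xs => qshift (g1 xs) (g2 xs) (g3 xs)).
Proof. move=> H1 H2 H3; rewrite /qshift /qc /qa /qb /qd; rcs5. Qed.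
Lemma rc_qmax k g1 g2 : rc k g1 -> rc k g2 -> rc k (fun xs => qmax (g1 xs) (g2 xs)).
Proof. move=> H1 H2; rewrite /qmax /qle /qa /qb /qd; rcs5. Qed.
Lemma rc_qmin k g1 g2 : rc k g1 -> rc k g2 -> rc k (fun xs => qmin (g1 xs) (g2 xs)).
Proof. move=> H1 H2; rewrite /qmin /qle /qa /qb /qd; rcs5. Qed.
Lemma rc_qc k g1 g2 g3 : rc k g1 -> rc k g2 -> rc k g3 ->
  rc k (fun xs => qc (g1 xs) (g2 xs) (g3 xs)).
Proof. move=> H1 H2 H3; rewrite /qc; rcs5. Qed.

Ltac rcs6 := repeat first
  [ exact: rc_const | assumption
  | (apply: rc_proj; done)
  | apply: rc_tpf | apply: rc_tnf | apply: rc_qshift | apply: rc_qmax | apply: rc_qmin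
  | apply: rc_qc
  | apply: rc_odd_if | apply: rc_negb
  | apply: rc_addE | apply: rc_mulE | apply: rc_subE | apply: rc_succE
  | apply: rc_predE | apply: rc_ifzE | apply: rc_doubleE | apply: rc_halfE
  | apply: rc_oddE | apply: rc_divSE' | apply: rc_leqE
  | apply: rc_u1E | apply: rc_u2E | apply: rc_npairE ].

Lemma rc_outK : rc3 (fun x _ n => outK x n).
Proof. rewrite /outK /outK1 /outK2 /outK3; rcs6. Qed.

Lemma rc_outH : rc3 (fun x y _ => outH x y).
Proof. rewrite /outH /slotH /qa /qb /qd; rcs6. Qed.

End RcProofs.

Opaque nunpair npair.

Section RealPart.
Local Open Scope classical_set_scope.
Local Open Scope ring_scope.

Section RealCodes.
Context {R : realType}.

Lemma nuQ_qc a b c : nuQ R (qc a b c) = (a%:R - b%:R) / c.+1%:R.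
Proof. by rewrite /nuQ /qc !nunpair_npair. Qed.

Lemma nuQ_E q : nuQ R q = ((qa q)%:R - (qb q)%:R) / (qd q).+1%:R.
Proof. by rewrite -{1}(qcE q) nuQ_qc. Qed.

Lemma nuI_pair l h : @nuI R (npair l h) = [set x | nuQ R l < x < nuQ R h].
Proof. by rewrite /nuI nunpair_npair. Qed.

Lemma nuI_E n : @nuI R n = [set x | nuQ R (nunpair n).1 < x < nuQ R (nunpair n).2].
Proof. by rewrite -{1}(npair_nunpair n) nuI_pair. Qed.

Lemma nuQ_shift q tp tn : nuQ R (qshift q tp tn) = nuQ R q + tp%:R - tn%:R.
Proof.
rewrite /qshift nuQ_qc nuQ_E !natrD !natrM.
set c := qd q.
have hc : (1 + c%:R) != 0 :> R by rewrite addrC natr1 pnatr_eq0.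
have hc' : (c%:R + 1) != 0 :> R by rewrite natr1 pnatr_eq0.
by field.
Qed.

Lemma qle_E q1 q2 : qle q1 q2 = (nuQ R q1 <= nuQ R q2).
Proof.
rewrite !nuQ_E /qle -(ler_nat R) !natrD !natrM.
have h1 : 0 < (qd q1).+1%:R :> R by rewrite ltr0n.
have h2 : 0 < (qd q2).+1%:R :> R by rewrite ltr0n.
rewrite ler_pdivrMr // mulrAC ler_pdivlMr //.
apply/idP/idP => H; lra.
Qed.

Lemma qmax_lt q1 q2 (y : R) : (nuQ R (qmax q1 q2) < y) <-> (nuQ R q1 < y /\ nuQ R q2 < y).
Proof.
rewrite /qmax qle_E; case: ifP => H; split => [h|[]//].
- split=> //; exact: le_lt_trans H h.
- split=> //; apply: lt_trans h; by rewrite ltNge H.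
Qed.

Lemma qmin_gt q1 q2 (y : R) : (y < nuQ R (qmin q1 q2)) <-> (y < nuQ R q1 /\ y < nuQ R q2).
Proof.
rewrite /qmin qle_E; case: ifP => H; split => [h|[]//].
- split=> //; exact: lt_le_trans h H.
- split=> //; apply: lt_trans h _; by rewrite ltNge H.
Qed.

Lemma nuQ_int z : nuQ R (qc z 0 0) = z%:R.
Proof. by rewrite nuQ_qc subr0 divr1. Qed.

End RealCodes.

Section Geometry.
Context {R : realType}.

Definition tR (s : nat) : R := (tpf s)%:R - (tnf s)%:R.
Definition Bset (A : set R) : set R :=
  [set y | exists s : nat, (s.*2)%:R <= y <= (s.*2.+1)%:R /\ A (y - tR s)].
Definition kout (p : baire) : baire := fun n => outK (p (idxK n)) n.

Lemma nuQ_qc1 s : nuQ R (qc s.*2 1 0) = (s.*2)%:R - 1.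
Proof. by rewrite nuQ_qc divr1. Qed.
Lemma nuQ_qcN j : nuQ R (qc 0 j 0) = - j%:R.
Proof. by rewrite nuQ_qc divr1 sub0r. Qed.

Lemma nuI_outK1 v s (x : R) :
  nuI (outK1 v s) x <-> (nuI v (x - tR s) /\ (s.*2)%:R - 1 < x < (s.*2.+2)%:R).
Proof.
rewrite /outK1 nuI_pair nuI_E /=.
split.
- move=> /andP [/qmax_lt [h1 h2] /qmin_gt [h3 h4]].
  move: h1 h3; rewrite !nuQ_shift /tR => h1 h3.
  rewrite nuQ_qc1 in h2; rewrite nuQ_int in h4.
  split; [apply/andP; split; lra | apply/andP; split; lra].
- move=> [/andP [h1 h3] /andP [h2 h4]]; apply/andP; split.
  + apply/qmax_lt; rewrite nuQ_shift nuQ_qc1; move: h1; rewrite /tR; split; lra.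
  + apply/qmin_gt; rewrite nuQ_shift nuQ_int; move: h3; rewrite /tR; split; lra.
Qed.

Lemma nuI_outK2 s (x : R) : nuI (outK2 s) x <-> (s.*2.+1)%:R < x < (s.*2.+2)%:R.
Proof. by rewrite /outK2 nuI_pair /= !nuQ_int. Qed.

Lemma nuI_outK3 j (x : R) : nuI (outK3 j) x <-> - (j.+1)%:R < x < 0.
Proof. by rewrite /outK3 nuI_pair /= nuQ_qcN nuQ_int. Qed.

Lemma slot_le (s s' : nat) (y : R) : (s.*2)%:R <= y -> y < (s'.*2.+2)%:R -> (s <= s')%N.
Proof.
move=> h1 h2; have : (s.*2)%:R < (s'.*2.+2)%:R :> R by exact: le_lt_trans h1 h2.
rewrite ltr_nat; lia.
Qed.
Lemma slot_ge (s s' : nat) (y : R) : (s'.*2)%:R - 1 < y -> y <= (s.*2.+1)%:R -> (s' <= s)%N.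
Proof.
move=> h1 h2; have : (s'.*2)%:R < (s.*2.+2)%:R :> R.
  have e : (s.*2.+2)%:R = (s.*2.+1)%:R + 1 :> R by rewrite natr1.
  rewrite e; lra.
rewrite ltr_nat; lia.
Qed.

Lemma K_name (p : baire) (A : set R) :
  delta_closed_neg p A -> delta_closed_neg (kout p) (Bset A).
Proof.
rewrite /delta_closed_neg => HA; apply/seteqP; split => y /=.
- move=> nB; case: (ltrP y 0) => hy.
  + set j := Num.truncn (- y).
    have hy' : 0 <= - y by rewrite oppr_ge0 ltW.
    have /andP [_ hj] := Num.Theory.truncn_itv hy'.
    exists (j.*2.*2) => //; rewrite /kout /outK /idxK.
    have -> : odd j.*2.*2 = false by rewrite odd_double.
    have -> : odd (j.*2.*2)./2 = false by rewrite doubleK odd_double.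
    rewrite !doubleK; apply/nuI_outK3; apply/andP; split => //; lra.
  + set s := Num.truncn (y / 2).
    have /andP [hs1 hs2] := Num.Theory.truncn_itv (divr_ge0 hy (ler0n R 2)).
    have hs1' : (s.*2)%:R <= y by rewrite -muln2 natrM; move: hs1; rewrite -/s; lra.
    have hs2' : y < (s.*2.+2)%:R.
      have e : (s.*2.+2)%:R = (s.+1)%:R * 2 :> R by rewrite -natrM; congr (_%:R); lia.
      by rewrite e; move: hs2; rewrite -/s; lra.
    case: (lerP y (s.*2.+1)%:R) => hy2.
    * have nA : ~ A (y - tR s) by move=> hA; apply: nB; exists s; split => //; apply/andP.
      have : (~` A) (y - tR s) by [].
      rewrite HA => -[i _ Hi].
      have ho : odd ((npair s i).*2.+1) by rewrite oddS odd_double.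
      have hh : ((npair s i).*2.+1)./2 = npair s i.
        by move: (npair s i) => m; lia.
      exists ((npair s i).*2.+1); first by [].
      rewrite /kout /outK /idxK ho hh nunpair_npair.
      apply/nuI_outK1; split; first exact: Hi.
      apply/andP; split; [lra | exact: hs2'].
    * have hh : (s.*2.+1)./2 = s by have : forall m, (m.*2.+1)./2 = m by move=> m; lia.
      have ho : odd (s.*2.+1) by rewrite oddS odd_double.
      exists ((s.*2.+1).*2) => //; rewrite /kout /outK /idxK.
      rewrite odd_double doubleK ho hh; apply/nuI_outK2; apply/andP; split => //.
- move=> [n _ Hn] [s' [/andP [h1 h2] hA]]; move: Hn; rewrite /kout /outK /idxK.
  case: ifP => hodd.
  + move=> /nuI_outK1 [Hi /andP [h3 h4]].
    set s := (nunpair n./2).1 in Hi h3 h4.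
    have e : s' = s.
      by apply/eqP; rewrite eqn_leq (slot_le h1 h4) (slot_ge h3 h2).
    have : (~` A) (y - tR s) by rewrite HA; eexists; [done | exact: Hi].
    by rewrite -e => /(_ hA).
  + case: ifP => _.
    * move=> /nuI_outK2 /andP [h3 h4].
      have := slot_le h1 h4; have : (s'.*2.+1)%:R > (n./2./2).*2.+1%:R :> R.
        exact: lt_le_trans h3 h2.
      rewrite ltr_nat; lia.
    * move=> /nuI_outK3 /andP [_ h4]; move: h1; rewrite leNgt => /negP; apply.
      exact: lt_le_trans h4 (ler0n _ _).
Qed.

End Geometry.

Section HSide.
Context {R : realType}.

Lemma slotH_correct x s (y : R) : (s.*2)%:R <= y <= (s.*2.+1)%:R ->
  `|nuQ R x - y| <= 4^-1 -> slotH x = s.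
Proof.
move=> /andP [hy1 hy2] hxy; rewrite /slotH.
have hq := nuQ_E (R := R) x.
move: hq; set a := qa x; set b := qb x; set c := qd x => hq.
have hC : 0 < (c.+1)%:R :> R by rewrite ltr0n.
have huC : (nuQ R x) * (c.+1)%:R = a%:R - b%:R by rewrite hq mulfVK // gt_eqF.
move: hxy; rewrite ler_norml -div1r => /andP [hu1 hu2].
have e2 : forall m : nat, (m.*2)%:R = 2 * m%:R :> R by move=> m; rewrite -muln2 natrM mulrC.
have e21 : (s.*2.+1)%:R = 2 * s%:R + 1 :> R by rewrite -natr1 e2.
rewrite e2 in hy1; rewrite e21 in hy2.
have hs0 : 0 <= s%:R :> R by [].
have h1 : (b.*2 < a.*2 + c.+1)%N.
  rewrite -(ltr_nat R) natrD !e2.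
  have h2u : 0 < 2 * (nuQ R x) + 1.
    lra.
  have : 0 < (2 * (nuQ R x) + 1) * (c.+1)%:R by apply: mulr_gt0.
  rewrite mulrDl mul1r -mulrA huC; lra.
have hN : ((a.*2 + c.+1 - b.*2)%N%:R = 2 * (nuQ R x * (c.+1)%:R) + (c.+1)%:R :> R).
  rewrite natrB ?(ltnW h1) // natrD !e2 huC; ring.
apply/eqP; rewrite eqn_leq; apply/andP; split.
- suff : ((a.*2 + c.+1 - b.*2) %/ (4 * c + 3).+1 < s.+1)%N by rewrite ltnS.
  rewrite ltn_divLR // -(ltr_nat R) hN natrM.
  have -> : ((4 * c + 3).+1)%:R = 4 * (c.+1)%:R :> R.
    by rewrite -natrM; congr (_%:R); lia.
  nra.
- rewrite leq_divRL // -(ler_nat R) hN natrM.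
  have -> : ((4 * c + 3).+1)%:R = 4 * (c.+1)%:R :> R.
    by rewrite -natrM; congr (_%:R); lia.
  nra.
Qed.

Lemma H_name (A : set R) (r : baire) (y : R) : Bset A y -> delta_cauchy r y ->
  exists z, A z /\ delta_cauchy (fun n => outH (r 2%N) (r n)) z.
Proof.
move=> [s [hy hA]] hr; exists (y - tR s); split => // n.
have h2 : `|nuQ R (r 2%N) - y| <= 4^-1.
  by have := hr 2%N; rewrite expr2 -natrM.
have hs := slotH_correct hy h2.
rewrite /outH hs nuQ_shift /tR.
have -> : nuQ R (r n) + (tnf s)%:R - (tpf s)%:R - (y - ((tpf s)%:R - (tnf s)%:R)) =
  nuQ R (r n) - y by ring.
exact: hr.
Qed.

End HSide.

Section Meas.
Context {R : realType}.
Local Notation mu := (@lebesgue_measure R).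

Lemma nuI_measurable n : measurable (nuI n : set (measurableTypeR R)).
Proof.
rewrite nuI_E.
have -> : [set x : R | nuQ R (nunpair n).1 < x < nuQ R (nunpair n).2] =
   [set` `]nuQ R (nunpair n).1, nuQ R (nunpair n).2[ ] by apply/seteqP; split => x; rewrite /= in_itv.
exact: measurable_itv.
Qed.

Lemma name_measurable p (A : set R) : delta_closed_neg p A ->
  measurable (A : set (measurableTypeR R)).
Proof.
move=> HA; rewrite -[A]setCK; apply: measurableC; rewrite HA.
by apply: bigcupT_measurable => n; exact: nuI_measurable.
Qed.

Lemma lebesgue_shift (S : set R) (t : R) : measurable (S : set (measurableTypeR R)) ->
  mu [set x | S (x - t)] = mu S.
Proof.
move=> mS.
have mf : measurable_fun (T := measurableTypeR R) (U := measurableTypeR R) setT (fun x => x - t).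
  by apply: measurable_funD => //; exact: measurable_cst.
pose nu := measure_function_pushforward__canonical__measure_function_Measure mu mf.
have -> : mu [set x | S (x - t)] = nu S by [].
apply/esym.
apply: (@lebesgue_measure_unique R nu) => //.
move=> _ [[a b]] _ <-.
rewrite /nu /= /pushforward.
have -> : (fun x : R => x - t) @^-1` `]a, b]%classic = `](a + t), (b + t)]%classic.
  by apply/seteqP; split => x; rewrite /= !in_itv /=; move=> /andP [h1 h2]; apply/andP; split; lra.
rewrite !lebesgue_measure_itv /= !lte_fin ltrD2r.
by case: ifP => // _; congr (_%:E); ring.
Qed.

End Meas.

Section Meas2.
Context {R : realType}.
Local Notation mu := (@lebesgue_measure R).

Definition kz (z : nat) : R := if odd z then - ((z.+1)./2)%:R else (z./2)%:R.

Lemma tR_kz s : tR s = (s.*2)%:R - kz (zz s) :> R.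
Proof.
rewrite /tR /tpf /tnf /kz; case: (odd (zz s)) => /=.
  by rewrite mul1n mul0n natrD; ring.
by rewrite mul0n mul1n addn0; ring.
Qed.

Lemma kz_cover (x : R) : exists z, kz z <= x <= kz z + 1.
Proof.
case: (lerP 0 x) => hx.
  set n := Num.truncn x; have /andP [h1 h2] := Num.Theory.truncn_itv hx.
  exists n.*2; rewrite /kz odd_double doubleK; rewrite -natr1 in h2; apply/andP; split; lra.
have hx' : 0 <= - x by lra.
set n := Num.truncn (- x); have /andP [h1 h2] := Num.Theory.truncn_itv hx'.
have ho : odd n.*2.+1 by rewrite oddS odd_double.
exists n.*2.+1; rewrite /kz ho.
have -> : (n.*2.+2)./2 = n.+1 by have : forall m, (m.*2.+2)./2 = m.+1 by move=> m; lia.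
rewrite -natr1 in h2 *; apply/andP; split; lra.
Qed.

Definition Az (A : set R) z := A `&` [set x | kz z <= x <= kz z + 1].

Lemma Az_measurable (A : set R) z : measurable (A : set (measurableTypeR R)) ->
  measurable (Az A z : set (measurableTypeR R)).
Proof.
move=> mA; apply: measurableI => //.
have -> : [set x : R | kz z <= x <= kz z + 1] = [set` `[kz z, kz z + 1] ].
  by apply/seteqP; split => x; rewrite /= in_itv.
exact: measurable_itv.
Qed.

Lemma pos_piece (A : set R) : measurable (A : set (measurableTypeR R)) ->
  (0 < mu A)%E -> exists z, (0 < mu (Az A z))%E.
Proof.
move=> mA hA; apply: contrapT => hn.
have h0 : forall z, mu (Az A z) = 0%E.
  move=> z; apply/eqP; rewrite eq_le measure_ge0 andbT leNgt; apply/negP => h.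
  by apply: hn; exists z.
have : (mu A <= \sum_(n <oo) mu (Az A n))%E.
  apply: measure_sigma_subadditive => //.
  - by move=> n; apply: Az_measurable.
  - move=> x Ax; have [z hz] := kz_cover x; exists z => //; split => //.
rewrite eseries0; last by move=> i _ _; exact: h0.
by rewrite leNgt hA.
Qed.

Lemma shift_measurable (S : set R) (t : R) : measurable (S : set (measurableTypeR R)) ->
  measurable ([set x | S (x - t)] : set (measurableTypeR R)).
Proof.
move=> mS.
have mf : measurable_fun (T := measurableTypeR R) (U := measurableTypeR R) setT (fun x => x - t).
  by apply: measurable_funD => //; exact: measurable_cst.
have := mf measurableT S mS; rewrite setTI; exact.
Qed.

Lemma B_large p (A : set R) (eps : R) : delta_closed_neg p A -> (0 < mu A)%E ->
  (eps%:E < mu (Bset A))%E.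
Proof.
move=> HA hA.
have mA := name_measurable HA.
have mB := name_measurable (K_name HA).
have [z0 hz0] := pos_piece mA hA.
set d := mu (Az A z0) in hz0.
pose C j := [set y : R | Az A z0 (y - tR (npair z0 j))].
have mC : forall j, measurable (C j : set (measurableTypeR R)).
  by move=> j; apply: shift_measurable; apply: Az_measurable.
have muC : forall j, mu (C j) = d.
  by move=> j; apply: lebesgue_shift; apply: Az_measurable.
have slotC : forall j y, C j y -> ((npair z0 j).*2)%:R <= y <= ((npair z0 j).*2.+1)%:R.
  move=> j y [_ /andP [h1 h2]]; move: h1 h2; rewrite tR_kz /zz nunpair_npair /=.
  rewrite -natr1 => h1 h2; apply/andP; split; lra.
have CB : forall j, C j `<=` Bset A.
  move=> j y Cy; exists (npair z0 j); split; first exact: slotC.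
  by case: Cy.
have tC : trivIset setT C.
  move=> i j _ _ [y [Ci Cj]].
  have /andP [a1 a2] := slotC _ _ Ci; have /andP [b1 b2] := slotC _ _ Cj.
  have e : npair z0 i = npair z0 j.
    apply/eqP; rewrite eqn_leq; apply/andP; split.
      apply: (slot_le a1); apply: le_lt_trans b2 _; rewrite ltr_nat; lia.
    apply: (slot_le b1); apply: le_lt_trans a2 _; rewrite ltr_nat; lia.
  by have [_ ->] := npair_inj e.
have key : forall n, (\sum_(i < n) d <= mu (Bset A))%E.
  move=> n; have -> : (\sum_(i < n) d = \sum_(i < n) mu (C i))%E.
    by apply: eq_bigr => i _; rewrite muC.
  rewrite -measure_bigsetU //.
  apply: le_measure; rewrite ?inE //.
    by apply: bigsetU_measurable => i _.
  by move=> y; rewrite -bigcup_mkord => -[i _ Ci]; exact: CB Ci.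
move: hz0 key; clear muC; case: d => [r| |] //.

- rewrite lte_fin => r0 key.
  have ge0 : 0 <= `|eps| / r by apply: divr_ge0 => //; exact: ltW.
  set n := (Num.truncn (`|eps| / r)).+1.
  have hn : `|eps| / r < n%:R by rewrite /n; exact: Num.Theory.truncnS_gt.
  apply: lt_le_trans (key n); rewrite sumEFin lte_fin sumr_const card_ord -mulr_natl.
  rewrite ltr_pdivrMr // in hn.
  have := ler_norm eps; lra.
- by move=> _ /(_ 1%N); rewrite big_ord1 leye_eq => /eqP ->; rewrite ltry.
Qed.

End Meas2.

End RealPart.

Lemma nunpair2_le k : ((nunpair k).2 <= k)%N.
Proof.
have := npairE (nunpair k).1 (nunpair k).2; rewrite npair_nunpair; lia.
Qed.

Lemma idxK_le n : (idxK n <= n)%N.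
Proof.
rewrite /idxK; case: ifP => // _; apply: leq_trans (nunpair2_le _) _; lia.
Qed.

Definition Kfun (p : baire) : option baire := Some (fun n => outK (p (idxK n)) n).
Definition Hfun (w : baire) : option baire := Some (fun n => outH (w 5%N) (w n.*2.+1)).
Definition Hid (w : baire) : option baire := Some (fun n => w n.*2.+1).
Definition Kid (p : baire) : option baire := Some p.

Lemma Kfun_comp : computable_partial Kfun.
Proof.
have := @local_computable (fun x _ n => outK x n) idxK idxK id rc_outK rc_idxK rc_idxK
  (rc_proj (k := 1) (i := 0) erefl).
apply.
- by move=> n m h; have := idxK_le n; split; lia.
- by [].
- by move=> n; exists n.+1.
Qed.

Lemma rc1_Lh : rc1 (fun m => if (6 <= m)%N then m./2 else 0%N).
Proof.
apply: rc_leqE; [exact: rc_const | exact: rc_proj | apply: rc_halfE; exact: rc_proj | exact: rc_const].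
Qed.

Lemma Hfun_comp : computable_partial Hfun.
Proof.
have := @local_computable (fun x y _ => outH x y) (fun _ => 5%N) (fun n => n.*2.+1)
  (fun m => if (6 <= m)%N then m./2 else 0%N) rc_outH (rc_const 1 5)
  (rc_succE (rc_doubleE (rc_proj (k := 1) (i := 0) erefl))) rc1_Lh.
apply.
- by move=> n m; case: ifP => h1 h2; split; lia.
- by move=> m n h; case: ifP; case: ifP => //; lia.
- by move=> n; exists (n.*2 + 6)%N; case: ifP; lia.
Qed.

Lemma Hid_comp : computable_partial Hid.
Proof.
have := @local_computable (fun x _ _ => x) (fun n => n.*2.+1) (fun n => n.*2.+1)
  (fun m => m./2) (rc_proj (k := 3) (i := 0) erefl)
  (rc_succE (rc_doubleE (rc_proj (k := 1) (i := 0) erefl)))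
  (rc_succE (rc_doubleE (rc_proj (k := 1) (i := 0) erefl)))
  (rc_halfE (rc_proj (k := 1) (i := 0) erefl)).
apply.
- by move=> n m h; split; lia.
- by move=> m n h; lia.
- by move=> n; exists (n.*2.+2); lia.
Qed.

Lemma Kid_comp : computable_partial Kid.
Proof.
have := @local_computable (fun x _ _ => x) id id id (rc_proj (k := 3) (i := 0) erefl)
  (rc_proj (k := 1) (i := 0) erefl) (rc_proj (k := 1) (i := 0) erefl)
  (rc_proj (k := 1) (i := 0) erefl).
apply.
- by move=> n m h; split.
- by [].
- by move=> n; exists n.+1.
Qed.


End Helpers.

Local Open Scope ring_scope.

Theorem theorem11p5 (R : realType) (eps : R) : 0 <= eps ->
  weihrauch_equiv (@delta_closed_neg R) (@delta_cauchy R) (P_gt_C_R 0)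
                  (@delta_closed_neg R) (@delta_cauchy R) (P_gt_C_R eps).
Proof.
move=> eps0; split.
- exists Hfun, Kfun; split; [exact: Hfun_comp | split; [exact: Kfun_comp|]].
  move=> G HG p A HA [x0 [hA _]].
  have HB := K_name HA.
  have [y By] : (Bset A !=set0)%classic.
    apply/set0P; apply/eqP => E; have := B_large 0 HA hA.
    by rewrite E measure0 ltxx.
  have := HG (fun n => outK (p (idxK n)) n) (Bset A) HB.
  case=> [|q [Gq [y' [hy' [_ By']]]]].
    by exists y; split; [exact: (B_large eps HA hA) | exact: By].
  rewrite /Kfun /= Gq /=.
  have [z [Az hz]] := H_name By' hy'.
  eexists; split; first reflexivity.
  exists z; split; last by split.
  have e1 : bjoin p q 5 = q 2%N by [].
  have e2 : forall m, bjoin p q m.*2.+1 = q m.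
    by move=> m; rewrite /bjoin oddS odd_double /=; congr q; lia.
  by move=> n; rewrite e1 e2; exact: hz.
- exists Hid, Kid; split; [exact: Hid_comp | split; [exact: Kid_comp|]].
  move=> G HG p A HA [x0 [hA Ax0]].
  have hA0 : (0%:E < lebesgue_measure A)%E by apply: le_lt_trans hA; rewrite lee_fin.
  have [|q [Gq [y' [hy' [_ Ay']]]]] := HG p A HA.
    by exists x0.
  rewrite /Kid /= Gq /=.
  eexists; split; first reflexivity.
  exists y'; split; last by split.
  have e2 : forall m, bjoin p q m.*2.+1 = q m.
    by move=> m; rewrite /bjoin oddS odd_double /=; congr q; lia.
  by move=> n; rewrite e2; exact: hy'.
Qed.
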